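(* Let $Q$ be a conjunctive query without self-joins with connected subqueries $Q_1,\dots,Q_s$. Then $Q$ contains a hard structure if and only if $Q_i$ contains a hard structure for some $i\in\{1,\dots,s\}$.
   Context: CQ $Q(\mathbf{A}) :- R_1(\mathbb{A}_1),\dots,R_p(\mathbb{A}_p)$ with distinct relation symbols, $\mathrm{attr}(R_i)=\mathbb{A}_i$, $\mathrm{attr}(Q)=\bigcup_i\mathbb{A}_i$, $\mathrm{head}(Q)=\mathbf{A}$. Standing assumption: distinct relations have distinct attribute sets. Connected subqueries: the subqueries formed by the relations of each connected component of the graph on relations with an edge between two relations iff they share an attribute (head of each is $\mathrm{head}(Q)$ intersected with its attributes). $R_j$ is exogenous if another relation $R_i$ has $\mathrm{attr}(R_i)\subsetneq\mathrm{attr}(R_j)$, endogenous otherwise. A path between relations $R_i,R_j$ using only attributes in a set $S$ is a sequence of relations from $R_i$ to $R_j$ with consecutive relations sharing an attribute of $S$. Triad-like structure: three endogenous relations such that for each pair there is a path between them using only attributes in $\mathrm{attr}(Q)\setminus(\mathrm{head}(Q)\cup\mathrm{attr}(R))$, $R$ the third. $R_j$ is dominated by $R_i$ if (1) $\mathrm{attr}(R_i)\subseteq\mathrm{attr}(R_j)$; (2) for every $R_k$ with $\mathrm{attr}(R_i)\setminus\mathrm{attr}(R_k)\ne\emptyset$, $\mathrm{attr}(R_j)\cap\mathrm{attr}(R_k)\subseteq\mathrm{attr}(R_i)\cap\mathrm{head}(Q)$; (3) $\mathrm{attr}(R_i)\subseteq\mathrm{head}(Q)$ or $\mathrm{head}(Q)\subseteq\mathrm{attr}(R_i)$;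 non-dominated relations are dominated by no other relation. Strand: two non-dominated relations $R_i,R_j$ with $\mathrm{head}(Q)\cap\mathrm{attr}(R_i)\ne\mathrm{head}(Q)\cap\mathrm{attr}(R_j)$ and $(\mathrm{attr}(R_i)\cap\mathrm{attr}(R_j))\setminus\mathrm{head}(Q)\ne\emptyset$. The head join of non-dominated relations is the full query of non-dominated relations restricted to $\mathrm{head}(Q)$; a full query is hierarchical if for all attributes $A,B$ the sets of relations containing them are nested or disjoint. A query contains a hard structure if it has a triad-like structure or a strand, or the head join of its non-dominated relations is non-hierarchical. *)

(* Defs.v *)
From mathcomp Require Import all_boot.
Set Implicit Arguments. Unset Strict Implicit. Unset Printing Implicit Defensive.

(* A self-join-free CQ is given by a finite type I of relation symbols
   (relation R_i for i : I), a finite type A of attributes, the attribute sets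
   attr : I -> {set A}, and the head.  A (sub)query is represented by a set
   S : {set I} of its relations together with its head H : {set A}. *)

Definition attrQ (I A : finType) (attr : I -> {set A}) (S : {set I}) : {set A} :=
  \bigcup_(i in S) attr i.

Definition exogenous (I A : finType) (attr : I -> {set A}) (S : {set I}) (j : I) : bool :=
  [exists i in S, attr i \proper attr j].

Definition endogenous (I A : finType) (attr : I -> {set A}) (S : {set I}) (j : I) : bool :=
  (j \in S) && ~~ exogenous attr S j.

Definition step (I A : finType) (attr : I -> {set A}) (S : {set I}) (X : {set A}) : rel I :=
  fun i k => [&& i \in S, k \in S & attr i :&: attr k :&: X != set0].

Definition path_using (I A : finType) (attr : I -> {set A}) (S : {set I}) (X : {set A})
  (i j : I) : bool := connect (step attr S X) i j.

Definition triad_like (I A : finType) (attr : I -> {set A}) (S : {set I}) (H : {set A}) : Prop :=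
  exists i j k : I,
    [/\ i != j, j != k & i != k] /\
    [/\ endogenous attr S i, endogenous attr S j & endogenous attr S k] /\
    [/\ path_using attr S (attrQ attr S :\: (H :|: attr k)) i j,
        path_using attr S (attrQ attr S :\: (H :|: attr i)) j k &
        path_using attr S (attrQ attr S :\: (H :|: attr j)) i k].

Definition dominated_by (I A : finType) (attr : I -> {set A}) (S : {set I}) (H : {set A})
  (j i : I) : bool :=
  [&& attr i \subset attr j,
      [forall k in S, (attr i :\: attr k != set0) ==>
                      (attr j :&: attr k \subset attr i :&: H)] &
      (attr i \subset H) || (H \subset attr i)].

Definition non_dominated (I A : finType) (attr : I -> {set A}) (S : {set I}) (H : {set A})
  (j : I) : bool :=
  (j \in S) && ~~ [exists i in S, (i != j) && dominated_by attr S H j i].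

Definition strand (I A : finType) (attr : I -> {set A}) (S : {set I}) (H : {set A}) : Prop :=
  exists i j : I,
    [/\ non_dominated attr S H i, non_dominated attr S H j,
        H :&: attr i != H :&: attr j &
        (attr i :&: attr j) :\: H != set0].

(* relations of the head join (non-dominated relations restricted to H)
   that contain attribute a *)
Definition hj_rels (I A : finType) (attr : I -> {set A}) (S : {set I}) (H : {set A})
  (a : A) : {set I} :=
  [set i | non_dominated attr S H i & a \in attr i :&: H].

Definition head_join_hierarchical (I A : finType) (attr : I -> {set A}) (S : {set I})
  (H : {set A}) : Prop :=
  forall a b : A,
    let Ra := hj_rels attr S H a in let Rb := hj_rels attr S H b in
    [|| Ra \subset Rb, Rb \subset Ra | [disjoint Ra & Rb]].

Definition hard_structure (I A : finType) (attr : I -> {set A}) (S : {set I}) (H : {set A}) : Prop :=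
  triad_like attr S H \/ strand attr S H \/ ~ head_join_hierarchical attr S H.

Definition share (I A : finType) (attr : I -> {set A}) : rel I :=
  fun i j => attr i :&: attr j != set0.

Definition component (I A : finType) (attr : I -> {set A}) (r : I) : {set I} :=
  [set j | connect (share attr) r j].

(* Main.v *)
Require Import Defs.
From mathcomp Require Import all_boot.
Set Implicit Arguments. Unset Strict Implicit. Unset Printing Implicit Defensive.

Lemma connect_transfer (T : finType) (P : pred T) (e e' : rel T) :
  (forall u v, P u -> e u v -> P v /\ e' u v) ->
  forall x y, P x -> connect e x y -> P y /\ connect e' x y.
Proof.
move=> h x y Px /connectP [p pth ->].
elim: p x Px pth => [|z p IH] x Px /=; first by split.
case/andP => exz pz; have [Pz e'xz] := h _ _ Px exz.
have [Py cz] := IH _ Pz pz; split => //.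
exact: connect_trans (connect1 e'xz) cz.
Qed.

Lemma share_sym (I A : finType) (attr : I -> {set A}) : symmetric (share attr).
Proof. by move=> i j; rewrite /share setIC. Qed.

Lemma comp_share (I A : finType) (attr : I -> {set A}) r i j :
  i \in component attr r -> share attr i j -> j \in component attr r.
Proof. rewrite !inE => ci sij; exact: connect_trans ci (connect1 sij). Qed.

Lemma comp_inter (I A : finType) (attr : I -> {set A}) r i j x :
  i \in component attr r -> x \in attr i -> x \in attr j -> j \in component attr r.
Proof.
move=> ci xi xj; apply: comp_share ci _; apply/set0Pn; exists x; by rewrite inE xi xj.
Qed.

Lemma comp_inter' (I A : finType) (attr : I -> {set A}) r i j x :
  j \in component attr r -> x \in attr i -> x \in attr j -> i \in component attr r.
Proof. move=> cj xi xj; exact: comp_inter cj xj xi. Qed.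

Lemma attr_subQ (I A : finType) (attr : I -> {set A}) (S : {set I}) i :
  i \in S -> attr i \subset attrQ attr S.
Proof. move=> iS; exact: (bigcup_sup i iS). Qed.

Lemma in_attrQ (I A : finType) (attr : I -> {set A}) (S : {set I}) i x :
  i \in S -> x \in attr i -> x \in attrQ attr S.
Proof. move=> iS xi; exact: (subsetP (attr_subQ attr iS)). Qed.

Lemma sub_share (I A : finType) (attr : I -> {set A}) i j :
  attr i != set0 -> attr i \subset attr j -> share attr i j.
Proof. move=> /set0Pn [x xi] sij; apply/set0Pn; exists x; by rewrite inE xi (subsetP sij). Qed.

Lemma dom_S_to_C (I A : finType) (attr : I -> {set A}) (head : {set A}) r j i :
  (forall i, attr i != set0) ->
  j \in component attr r -> dominated_by attr [set: I] head j i ->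
  i \in component attr r /\
  dominated_by attr (component attr r) (head :&: attrQ attr (component attr r)) j i.
Proof.
move=> ne cj /and3P [s1 /forall_inP h2 h3].
have ci : i \in component attr r.
  by apply: comp_share cj _; rewrite share_sym; exact: sub_share (ne i) s1.
split=> //; apply/and3P; split=> //.
- apply/forall_inP => k kC; apply/implyP => nk.
  have sub := implyP (h2 k (in_setT k)) nk.
  apply/subsetP => x xjk; have := subsetP sub x xjk; rewrite !inE => /andP[xi xh].
  by rewrite xi xh (in_attrQ ci xi).
- case/orP: h3 => h; apply/orP; [left | right].
    by rewrite subsetI h attr_subQ.
  exact: subset_trans (subsetIl _ _) h.
Qed.

Lemma dom_C_to_S (I A : finType) (attr : I -> {set A}) (head : {set A}) r j i :
  j \in component attr r -> attr i \subset head ->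
  dominated_by attr (component attr r) (head :&: attrQ attr (component attr r)) j i ->
  dominated_by attr [set: I] head j i.
Proof.
move=> cj hi /and3P[s1 /forall_inP h2 _]; apply/and3P; split => //; last by rewrite hi.
apply/forall_inP => k _; apply/implyP=> nk.
case: (boolP (k \in component attr r)) => kC.
  have sub := implyP (h2 k kC) nk; apply: subset_trans sub _; apply: setIS; exact: subsetIl.
apply/subsetP => x; rewrite inE => /andP[xj xk].
by rewrite (comp_inter cj xj xk) in kC.
Qed.

Lemma dom_trans (I A : finType) (attr : I -> {set A}) (S : {set I}) (H : {set A}) j i l :
  dominated_by attr S H j i -> dominated_by attr S H i l -> dominated_by attr S H j l.
Proof.
move=> /and3P[s1 /forall_inP h2 _] /and3P[s2 /forall_inP h2' h3'].
apply/and3P; split => //; first exact: subset_trans s2 s1.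
apply/forall_inP => k kS; apply/implyP => nl.
have ni : attr i :\: attr k != set0.
  case/set0Pn: nl => x; rewrite inE => /andP[xk xl]; apply/set0Pn; exists x.
  by rewrite inE xk (subsetP s2).
have A1 := implyP (h2 k kS) ni; have A2 := implyP (h2' k kS) nl.
apply/subsetP => x; rewrite inE => /andP[xj xk].
have : x \in attr i :&: H by apply: (subsetP A1); rewrite inE xj xk.
rewrite inE => /andP[xi _]; apply: (subsetP A2); by rewrite inE xi xk.
Qed.

Lemma nd_C_to_S (I A : finType) (attr : I -> {set A}) (head : {set A}) r j :
  (forall i, attr i != set0) ->
  non_dominated attr (component attr r) (head :&: attrQ attr (component attr r)) j ->
  non_dominated attr [set: I] head j.
Proof.
move=> ne /andP[cj nd]; apply/andP; split; first by rewrite in_setT.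
apply: contra nd => /exists_inP [i _ /andP[nij dij]].
have [ci dC] := dom_S_to_C ne cj dij.
by apply/exists_inP; exists i => //; rewrite nij.
Qed.

Lemma HC_attr (I A : finType) (attr : I -> {set A}) (head : {set A}) (C : {set I}) i :
  i \in C -> head :&: attrQ attr C :&: attr i = head :&: attr i.
Proof.
move=> ci; apply/setP => x; rewrite !inE.
case xi: (x \in attr i); rewrite ?andbT ?andbF //.
by rewrite (in_attrQ ci xi) andbT.
Qed.

Lemma nd_S_to_C (I A : finType) (attr : I -> {set A}) (head : {set A}) r p :
  p \in component attr r -> non_dominated attr [set: I] head p ->
  (forall i', i' \in component attr r -> i' != p ->
     dominated_by attr (component attr r) (head :&: attrQ attr (component attr r)) p i' ->
     head :&: attrQ attr (component attr r) \subset attr i' -> False) ->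
  non_dominated attr (component attr r) (head :&: attrQ attr (component attr r)) p.
Proof.
move=> cp /andP[_ nd] h; apply/andP; split => //.
apply/negP => /exists_inP [i' ci' /andP[ne dC]].
have dC' := dC; case/and3P: dC' => _ _ /orP [h3|h3].
  move/negP: nd; apply; apply/exists_inP; exists i' => //; rewrite ne /=.
  apply: dom_C_to_S cp _ dC; exact: subset_trans h3 (subsetIl _ _).
exact: h i' ci' ne dC h3.
Qed.

Lemma endo_S_to_C (I A : finType) (attr : I -> {set A}) r j :
  j \in component attr r -> endogenous attr [set: I] j -> endogenous attr (component attr r) j.
Proof.
move=> cj /andP[_ ne]; rewrite /endogenous cj /=; apply: contra ne.
by case/exists_inP => i _ h; apply/exists_inP; exists i.
Qed.

Lemma endo_C_to_S (I A : finType) (attr : I -> {set A}) r j :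
  (forall i, attr i != set0) ->
  endogenous attr (component attr r) j -> endogenous attr [set: I] j.
Proof.
move=> ne /andP[cj nx]; rewrite /endogenous in_setT /=; apply: contra nx.
case/exists_inP => i _ h; apply/exists_inP; exists i => //.
apply: comp_share cj _; rewrite share_sym; apply: sub_share (ne i) _; exact: proper_sub h.
Qed.

Lemma path_S_to_C (I A : finType) (attr : I -> {set A}) (head : {set A}) r (Y : {set A}) i j :
  i \in component attr r ->
  path_using attr [set: I] (attrQ attr [set: I] :\: (head :|: Y)) i j ->
  j \in component attr r /\
  path_using attr (component attr r)
    (attrQ attr (component attr r) :\: (head :&: attrQ attr (component attr r) :|: Y)) i j.
Proof.
move=> ci; apply: (connect_transfer (P := fun u => u \in component attr r)) => // u v cu.
rewrite /step; case/and3P => _ _ /set0Pn [x]; rewrite !inE => /andP[/andP[xu xv] /andP[/norP[xh xY] _]].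
have cv := comp_inter cu xu xv; split; first by move: cv; rewrite inE.
apply/and3P; split; [by move: cu; rewrite inE | by move: cv; rewrite inE | ]; apply/set0Pn; exists x.
by rewrite !inE xu xv (negbTE xY) (in_attrQ cu xu) (negbTE xh).
Qed.

Lemma path_C_to_S (I A : finType) (attr : I -> {set A}) (head : {set A}) r (Y : {set A}) i j :
  i \in component attr r ->
  path_using attr (component attr r)
    (attrQ attr (component attr r) :\: (head :&: attrQ attr (component attr r) :|: Y)) i j ->
  path_using attr [set: I] (attrQ attr [set: I] :\: (head :|: Y)) i j.
Proof.
move=> ci pth.
have h : forall u v, u \in component attr r ->
  step attr (component attr r)
    (attrQ attr (component attr r) :\: (head :&: attrQ attr (component attr r) :|: Y)) u v ->
  v \in component attr r /\ step attr [set: I] (attrQ attr [set: I] :\: (head :|: Y)) u v.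
  move=> u v cu.
  rewrite /step; case/and3P => _ cv /set0Pn [x]; rewrite !inE => /andP[/andP[xu xv] /andP[/norP[xh xY] xQ]].
  split; first by move: cv; rewrite inE.
  apply/and3P; split; rewrite ?in_setT //; apply/set0Pn; exists x.
  rewrite !inE xu xv (negbTE xY) (in_attrQ (in_setT u) xu) /= andbT.
  by move: xh; rewrite xQ andbT orbF.
by have [] := connect_transfer h ci pth.
Qed.

Lemma triad_S_to_C (I A : finType) (attr : I -> {set A}) (head : {set A}) :
  triad_like attr [set: I] head ->
  exists r, triad_like attr (component attr r) (head :&: attrQ attr (component attr r)).
Proof.
move=> [i [j [k [dist [[ei ej ek] [p1 p2 p3]]]]]]; exists i.
have ci : i \in component attr i by rewrite inE connect0.
have [cj p1'] := path_S_to_C ci p1. have [ck p3'] := path_S_to_C ci p3.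
have [_ p2'] := path_S_to_C cj p2.
exists i, j, k; split => //; split; split => //; exact: endo_S_to_C.
Qed.

Lemma triad_C_to_S (I A : finType) (attr : I -> {set A}) (head : {set A}) r :
  (forall i, attr i != set0) ->
  triad_like attr (component attr r) (head :&: attrQ attr (component attr r)) ->
  triad_like attr [set: I] head.
Proof.
move=> ne [i [j [k [dist [[ei ej ek] [p1 p2 p3]]]]]].
have ci : i \in component attr r by case/andP: ei.
have cj : j \in component attr r by case/andP: ej.
exists i, j, k; split => //; split; split.
- exact: endo_C_to_S ne ei.
- exact: endo_C_to_S ne ej.
- exact: endo_C_to_S ne ek.
- exact: path_C_to_S ci p1.
- exact: path_C_to_S cj p2.
- exact: path_C_to_S ci p3.
Qed.

Lemma strand_C_to_S (I A : finType) (attr : I -> {set A}) (head : {set A}) r :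
  (forall i, attr i != set0) ->
  strand attr (component attr r) (head :&: attrQ attr (component attr r)) ->
  strand attr [set: I] head.
Proof.
move=> ne [i [j [ni nj neq nz]]].
have ci : i \in component attr r by case/andP: ni.
have cj : j \in component attr r by case/andP: nj.
exists i, j; split; [exact: nd_C_to_S ne ni | exact: nd_C_to_S ne nj | |].
  by move: neq; rewrite HC_attr ?HC_attr.
case/set0Pn: nz => x; rewrite !inE => /andP[xh /andP[xi xj]].
apply/set0Pn; exists x; rewrite !inE xi xj andbT.
by move: xh; rewrite (in_attrQ ci xi) !andbT.
Qed.

Lemma strand_nd (I A : finType) (attr : I -> {set A}) (head : {set A}) r i j x :
  i \in component attr r -> j \in component attr r ->
  non_dominated attr [set: I] head i -> head :&: attr i != head :&: attr j ->
  x \in attr i -> x \in attr j -> x \notin head ->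
  non_dominated attr (component attr r) (head :&: attrQ attr (component attr r)) i.
Proof.
move=> ci cj ndi neq xi xj xh.
apply: (nd_S_to_C ci ndi) => i' ci' _ /and3P[s1 /forall_inP h2 _] h3.
have sj : attr i' \subset attr j.
  apply/subsetP => y yi'; apply/negPn/negP => yj.
  have nz : attr i' :\: attr j != set0 by apply/set0Pn; exists y; rewrite inE yj yi'.
  have := subsetP (implyP (h2 j cj) nz) x; rewrite !inE xi xj => /(_ isT) /andP[_ /andP[xh' _]].
  by rewrite xh' in xh.
apply: (negP neq); apply/eqP/setP => y; rewrite !inE; case yh: (y \in head) => //=.
apply/idP/idP => yi.
  apply: (subsetP sj); apply: (subsetP h3); by rewrite inE yh (in_attrQ ci yi).
apply: (subsetP s1); apply: (subsetP h3); by rewrite inE yh (in_attrQ cj yi).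
Qed.

Lemma strand_S_to_C (I A : finType) (attr : I -> {set A}) (head : {set A}) :
  strand attr [set: I] head ->
  exists r, strand attr (component attr r) (head :&: attrQ attr (component attr r)).
Proof.
move=> [i [j [ni nj neq /set0Pn [x]]]]; rewrite !inE => /andP[xh /andP[xi xj]].
exists i; have ci : i \in component attr i by rewrite inE connect0.
have cj := comp_inter ci xi xj.
exists i, j; split.
- exact: strand_nd ci cj ni neq xi xj xh.
- by apply: strand_nd cj ci nj _ xj xi xh; rewrite eq_sym.
- by rewrite HC_attr ?HC_attr.
- by apply/set0Pn; exists x; rewrite !inE xi xj (negbTE xh).
Qed.

Lemma hj_C_sub (I A : finType) (attr : I -> {set A}) (head : {set A}) r a p :
  (forall i, attr i != set0) ->
  p \in hj_rels attr (component attr r) (head :&: attrQ attr (component attr r)) a ->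
  p \in hj_rels attr [set: I] head a.
Proof.
move=> ne; rewrite !inE => /andP[nd /andP[xa /andP[ah _]]].
by rewrite (nd_C_to_S ne nd) xa ah.
Qed.

Lemma hj_C_back (I A : finType) (attr : I -> {set A}) (head : {set A}) r a b p :
  p \in hj_rels attr (component attr r) (head :&: attrQ attr (component attr r)) a ->
  p \in hj_rels attr [set: I] head b ->
  p \in hj_rels attr (component attr r) (head :&: attrQ attr (component attr r)) b.
Proof.
rewrite !inE => /andP[nd _] /andP[_ /andP[xb bh]].
have cp : p \in component attr r by case/andP: nd.
by rewrite nd xb bh (in_attrQ cp xb).
Qed.

Lemma hier_C_to_S (I A : finType) (attr : I -> {set A}) (head : {set A}) r :
  (forall i, attr i != set0) ->
  ~ head_join_hierarchical attr (component attr r) (head :&: attrQ attr (component attr r)) ->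
  ~ head_join_hierarchical attr [set: I] head.
Proof.
move=> ne nhC hS; apply: nhC => a b /=; have := hS a b; rewrite /=.
case/or3P => h; apply/or3P; [apply: Or31 | apply: Or32 | apply: Or33].
- apply/subsetP => p pa; apply: (hj_C_back pa); apply: (subsetP h); exact: hj_C_sub ne pa.
- apply/subsetP => p pa; apply: (hj_C_back pa); apply: (subsetP h); exact: hj_C_sub ne pa.
- rewrite -setI_eq0; apply/eqP/setP => p; rewrite in_setI in_set0; apply/negP => /andP[pa pb].
  move: h; rewrite -setI_eq0 => /eqP/setP/(_ p).
  by rewrite in_setI in_set0 (hj_C_sub ne pa) (hj_C_sub ne pb).
Qed.

Lemma hj_in_C (I A : finType) (attr : I -> {set A}) (head : {set A}) r0 a b p :
  p \in hj_rels attr [set: I] head a -> p \notin hj_rels attr [set: I] head b ->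
  r0 \in hj_rels attr [set: I] head a -> r0 \in hj_rels attr [set: I] head b ->
  p \in hj_rels attr (component attr r0) (head :&: attrQ attr (component attr r0)) a.
Proof.
move=> pa pnb r0a r0b.
have cr0 : r0 \in component attr r0 by rewrite inE connect0.
move: pa; rewrite inE => /andP[ndp]; rewrite inE => /andP[ap ah].
move: r0a; rewrite inE => /andP[_]; rewrite inE => /andP[ar0 _].
move: r0b; rewrite inE => /andP[_]; rewrite inE => /andP[br0 bh].
have cp := comp_inter' cr0 ap ar0.
rewrite inE; apply/andP; split; last by rewrite !inE ap ah (in_attrQ cp ap).
apply: (nd_S_to_C cp ndp) => i' _ _ /and3P[s1 _ _] h3.
have bC : b \in head :&: attrQ attr (component attr r0) by rewrite inE bh (in_attrQ cr0 br0).
have bp : b \in attr p := subsetP s1 _ (subsetP h3 _ bC).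
by move/negP: pnb; apply; rewrite inE ndp inE bp bh.
Qed.

Lemma hj_core (I A : finType) (attr : I -> {set A}) (head : {set A}) r0 a b :
  injective attr ->
  r0 \in hj_rels attr [set: I] head a -> r0 \in hj_rels attr [set: I] head b ->
  exists w,
  w \in hj_rels attr (component attr r0) (head :&: attrQ attr (component attr r0)) a /\
  w \in hj_rels attr (component attr r0) (head :&: attrQ attr (component attr r0)) b.
Proof.
move=> inj r0a r0b.
have cr0 : r0 \in component attr r0 by rewrite inE connect0.
move: r0a; rewrite inE => /andP[nd0]; rewrite inE => /andP[ar0 ah].
move: r0b; rewrite inE => /andP[_]; rewrite inE => /andP[br0 bh].
pose T := [pred z | (z \in component attr r0) &&
   ((z == r0) || dominated_by attr (component attr r0) (head :&: attrQ attr (component attr r0)) r0 z)].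
have r0T : T r0 by rewrite /T /= cr0 eqxx.
case: (@arg_minnP _ r0 T (fun z => #|attr z|) r0T) => w /andP[cw wr] wmin.
have key : forall y, y \in component attr r0 -> y != w ->
    dominated_by attr (component attr r0) (head :&: attrQ attr (component attr r0)) w y -> False.
  move=> y cy ny dy.
  have yT : T y.
    apply/andP; split; first exact: cy; apply/orP; right.
    case/orP: wr => [/eqP e | dw]; first by rewrite e in dy.
    exact: dom_trans dw dy.
  have le := wmin y yT.
  have pr : attr y \proper attr w.
    rewrite properEneq; case/and3P: dy => -> _ _; rewrite andbT.
    by apply: contra ny => /eqP e; rewrite (inj _ _ e).
  by have := leq_trans (proper_card pr) le; rewrite ltnn.
have ndw : non_dominated attr (component attr r0) (head :&: attrQ attr (component attr r0)) w.
  apply/andP; split => //; apply/negP => /exists_inP [y cy /andP[ny dy]]; exact: key y cy ny dy.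
have abw : (a \in attr w) && (b \in attr w).
  case: (eqVneq w r0) => [-> | nw]; first by rewrite ar0 br0.
  case/orP: wr => [/eqP e | dw]; first by rewrite e eqxx in nw.
  case/and3P: (dw) => _ _ /orP [h3|h3].
    exfalso; move/andP: nd0 => [_ /negP]; apply; apply/exists_inP; exists w; first by rewrite in_setT.
    rewrite nw /=; apply: (dom_C_to_S cr0 _ dw); exact: subset_trans h3 (subsetIl _ _).
  have aH : a \in head :&: attrQ attr (component attr r0) by rewrite inE ah (in_attrQ cr0 ar0).
  have bH : b \in head :&: attrQ attr (component attr r0) by rewrite inE bh (in_attrQ cr0 br0).
  by rewrite (subsetP h3 _ aH) (subsetP h3 _ bH).
case/andP: abw => aw bw.
exists w; split; rewrite inE ndw /= !inE ?aw ?bw ?ah ?bh /= ?(in_attrQ cw aw) ?(in_attrQ cw bw) //.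
Qed.

Lemma hier_S_to_C (I A : finType) (attr : I -> {set A}) (head : {set A}) :
  injective attr -> (forall i, attr i != set0) ->
  ~ head_join_hierarchical attr [set: I] head ->
  exists r, ~ head_join_hierarchical attr (component attr r)
               (head :&: attrQ attr (component attr r)).
Proof.
move=> inj ne nh.
have [a [b nP]] : exists a b, ~~ [|| hj_rels attr [set: I] head a \subset hj_rels attr [set: I] head b,
    hj_rels attr [set: I] head b \subset hj_rels attr [set: I] head a
  | [disjoint hj_rels attr [set: I] head a & hj_rels attr [set: I] head b]].
  case: (boolP [exists a, exists b, ~~ [|| hj_rels attr [set: I] head a \subset hj_rels attr [set: I] head b,
    hj_rels attr [set: I] head b \subset hj_rels attr [set: I] head a
  | [disjoint hj_rels attr [set: I] head a & hj_rels attr [set: I] head b]]]).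
    by case/existsP => a /existsP [b h]; exists a, b.
  move=> h; exfalso; apply: nh => a b /=.
  move: h; rewrite negb_exists => /forallP /(_ a); rewrite negb_exists => /forallP /(_ b).
  by rewrite negbK.
move: nP; rewrite !negb_or => /and3P [n1 n2 n3].
case/subsetPn: n1 => p pa pnb; case/subsetPn: n2 => q qb qna.
move: n3; rewrite -setI_eq0 => /set0Pn [r0]; rewrite in_setI => /andP[r0a r0b].
exists r0 => hC; have := hC a b; rewrite /=.
have pa' := hj_in_C pa pnb r0a r0b.
have qb' := hj_in_C qb qna r0b r0a.
have [w [wa wb]] := hj_core inj r0a r0b.
case/or3P => h.
- by move/negP: pnb; apply; apply: (hj_C_sub ne); apply: (subsetP h).
- by move/negP: qna; apply; apply: (hj_C_sub ne); apply: (subsetP h).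
- move: h; rewrite -setI_eq0 => /eqP/setP/(_ w).
  by rewrite in_setI in_set0 wa wb.
Qed.

Unset Implicit Arguments. Set Strict Implicit.

Theorem lemma9 (I A : finType) (attr : I -> {set A}) (head : {set A})
  (attr_inj : injective attr)
  (attr_nonempty : forall i : I, attr i != set0)
  (head_sub : head \subset attrQ attr [set: I]) :
  hard_structure attr [set: I] head <->
  exists r : I, hard_structure attr (component attr r)
                  (head :&: attrQ attr (component attr r)).
Proof.
split.
  case=> [tr | [st | nh]].
  - by have [r h] := triad_S_to_C tr; exists r; left.
  - by have [r h] := strand_S_to_C st; exists r; right; left.
  - by have [r h] := hier_S_to_C attr_inj attr_nonempty nh; exists r; right; right.
case=> r [tr | [st | nh]].
- by left; exact: triad_C_to_S attr_nonempty tr.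
- by right; left; exact: strand_C_to_S attr_nonempty st.
- by right; right; exact: hier_C_to_S attr_nonempty nh.
Qed.
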